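(* Let $v_1,\dots,v_d\in\mathbb{Z}^d$ be linearly independent. If $a\in\mathbb{Z}^d$, then the parallelepiped $P=a+\sum_{i=1}^d[0,v_i]$ contains a unimodular copy of $\Delta_d$. If $a\in\mathbb{R}^d$, then the parallelepiped $P=a+\sum_{i=1}^d[0,2v_i]$ contains a unimodular copy of $\Delta_d$.
   Context: $[v,w]$ denotes the segment $\mathrm{conv}(v,w)$ and sums are Minkowski sums. $\Delta_d=\mathrm{conv}(0,e_1,\dots,e_d)$. A unimodular copy of a set $Y$ is $\{Ay+b:y\in Y\}$ with $A\in\mathrm{GL}(d,\mathbb{Z})$ and $b\in\mathbb{Z}^d$. *)

(* Defs.v *)
(* Real space R^d is modelled as row vectors 'rV[R]_d over an
   archimedean real closed field R (the reals are such a field). *)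
From HB Require Import structures.
From mathcomp Require Import all_boot all_order all_algebra.
Set Implicit Arguments. Unset Strict Implicit. Unset Printing Implicit Defensive.
Import Order.TTheory GRing.Theory Num.Theory.
Local Open Scope ring_scope.

Section Defs.
Variables (R : archiRcfType) (d : nat).

Definition intv (z : 'rV[int]_d) : 'rV[R]_d := map_mx (fun k : int => k%:~R) z.

Definition conv (n : nat) (p : 'I_n -> 'rV[R]_d) : 'rV[R]_d -> Prop :=
  fun x => exists lam : 'I_n -> R,
    (forall i, 0 <= lam i) /\ \sum_i lam i = 1 /\ x = \sum_i lam i *: p i.

Definition segment (v w : 'rV[R]_d) : 'rV[R]_d -> Prop :=
  conv (fun i : 'I_2 => if val i == 0%N then v else w).

Definition msum (a : 'rV[R]_d) (S : 'I_d -> 'rV[R]_d -> Prop) : 'rV[R]_d -> Prop :=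
  fun x => exists y : 'I_d -> 'rV[R]_d, (forall i, S i (y i)) /\ x = a + \sum_i y i.

Definition parallelepiped (a : 'rV[R]_d) (c : R) (v : 'I_d -> 'rV[int]_d) :=
  msum a (fun i => segment 0 (c *: intv (v i))).

Definition simplex_vert (i : 'I_d.+1) : 'rV[R]_d :=
  if unlift ord0 i is Some j then delta_mx 0 j else 0.

Definition Delta : 'rV[R]_d -> Prop := conv simplex_vert.

(* unimodular image {A y + b : y in Y}, with A in GL(d,Z), b in Z^d
   (row-vector convention: y *m A) *)
Definition unimod_image (A : 'M[int]_d) (b : 'rV[int]_d) (Y : 'rV[R]_d -> Prop) :=
  fun x => exists y, Y y /\ x = y *m map_mx (fun k : int => k%:~R) A + intv b.

Definition contains_unimodular_copy (P Y : 'rV[R]_d -> Prop) :=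
  exists (A : 'M[int]_d) (b : 'rV[int]_d),
    A \in unitmx /\ (forall x, unimod_image A b Y x -> P x).

Definition lin_indep (v : 'I_d -> 'rV[int]_d) :=
  forall c : 'I_d -> R, \sum_i c i *: intv (v i) = 0 -> forall i, c i = 0.

End Defs.

(* Main.v *)
Require Import Defs.
From HB Require Import structures.
From mathcomp Require Import all_boot all_order all_algebra.
From Stdlib Require Import Classical ClassicalEpsilon.
From mathcomp Require Import lra ring.
Set Implicit Arguments. Unset Strict Implicit. Unset Printing Implicit Defensive.
Import Order.TTheory GRing.Theory Num.Theory.
Local Open Scope ring_scope.

Lemma ex_minP (P : nat -> Prop) n : P n -> exists m, P m /\ forall k, P k -> (m <= k)%N.
Proof.
elim/ltn_ind: n => n IH Pn.
case: (classic (exists k, (k < n)%N /\ P k)) => [[k [hk Pk]]|H]; first exact: IH hk Pk.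
exists n; split=> // k Pk; rewrite leqNgt; apply/negP=> hk; apply: H; exists k; split=> //.
Qed.

Lemma choiceF (A B : Type) (P : A -> B -> Prop) :
  (forall a, exists b, P a b) -> exists f : A -> B, forall a, P a (f a).
Proof.
move=> H; exists (fun a => proj1_sig (constructive_indefinite_description _ (H a))).
by move=> a; case: (constructive_indefinite_description _ (H a)).
Qed.

Section Comb.
Variables (d : nat) (M : 'M[int]_d).
Hypothesis hdet : \det M != 0.

Definition NN : int := `|\det M|.
Definition GG : 'M[int]_d := Num.sg (\det M) *: \adj M.
Definition kap (z : 'rV[int]_d) (i : 'I_d) := (z *m GG) 0 i.

Lemma GM : GG *m M = NN%:M.
Proof. by rewrite /GG -scalemxAl mul_adj_mx scale_scalar_mx /NN normrEsg. Qed.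

Lemma MG : M *m GG = NN%:M.
Proof. by rewrite /GG -scalemxAr mul_mx_adj scale_scalar_mx /NN normrEsg. Qed.

Lemma NN_gt0 : 0 < NN.
Proof. by rewrite /NN normr_gt0. Qed.

Lemma kap_comb z (y : 'I_d -> 'rV[int]_d) t i :
  kap (z - \sum_j t j *: y j) i = kap z i - \sum_j t j * kap (y j) i.
Proof.
rewrite /kap mulmxBl mulmx_suml !mxE summxE; congr (_ - _).
by apply: eq_bigr => j _; rewrite -scalemxAl mxE.
Qed.

Lemma kap_eq0 z : (forall i, kap z i = 0) -> z = 0.
Proof.
move=> H; apply/rowP => j; rewrite mxE.
have : z *m GG = 0 by apply/rowP => i; move: (H i); rewrite /kap => ->; rewrite mxE.
move/(congr1 (fun w => (w *m M) 0 j)); rewrite -mulmxA GM mul0mx mul_mx_scalar !mxE.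
by move/eqP; rewrite mulf_eq0 (gt_eqF NN_gt0) /= => /eqP.
Qed.

Definition fam (c : 'I_d -> int) (y : 'I_d -> 'rV[int]_d) :=
  forall k : 'I_d, (forall i : 'I_d, (k < i)%N -> kap (y k) i = 0) /\ kap (y k) k = c k /\ 0 < c k.

Definition minimal (c : 'I_d -> int) :=
  forall (k : 'I_d) z, (forall i : 'I_d, (k < i)%N -> kap z i = 0) -> 0 < kap z k -> c k <= kap z k.

Lemma sum_update (y : 'I_d -> 'rV[int]_d) (t : 'I_d -> int) kk q :
  \sum_j (t j + q * (j == kk)%:R) *: y j = \sum_j t j *: y j + q *: y kk.
Proof.
under eq_bigr do rewrite scalerDl.
rewrite big_split /=; congr (_ + _).
rewrite (bigD1 kk) //= eqxx mulr1 big1 ?addr0 // => j /negbTE ->.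
by rewrite mulr0 scale0r.
Qed.

Lemma mod_step m c : 0 < c -> 0 <= m - (m %/ c)%Z * c < c.
Proof.
move=> hc; have -> : m - (m %/ c)%Z * c = (m %% c)%Z.
  by rewrite {1}(divz_eq m c) addrC addKr.
by rewrite modz_ge0 ?gt_eqF // ltz_pmod.
Qed.

Lemma span_all c y : fam c y -> minimal c -> forall n z,
  (forall i : 'I_d, (n <= i)%N -> kap z i = 0) -> exists t : 'I_d -> int, z = \sum_j t j *: y j.
Proof.
move=> hf hm; elim=> [|n IH] z hz.
  exists (fun _ => 0); rewrite big1 ?(kap_eq0 (fun i => hz i isT)) // => j _.
  by rewrite scale0r.
case: (ltnP n d) => hn; last first.
  by apply: IH => i hi; have := ltn_ord i; rewrite ltnNge (leq_trans hn hi).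
pose kk := Ordinal hn.
pose q := (kap z kk %/ c kk)%Z.
have [hy1 [hy2 hc]] := hf kk.
have hk1 : forall i, kap (z - q *: y kk) i = kap z i - q * kap (y kk) i.
  by move=> i; rewrite /kap mulmxBl -scalemxAl !mxE.
have [t' ht'] : exists t' : 'I_d -> int, z - q *: y kk = \sum_j t' j *: y j.
  apply: IH => i hi; rewrite hk1.
  case: (ltngtP n i) => [hni||hni].
  - by rewrite hz // hy1 // mulr0 subr0.
  - by rewrite ltnNge hi.
  - have -> : i = kk by apply: val_inj.
    rewrite hy2; have /andP [h0 h1] := mod_step (kap z kk) hc.
    apply/eqP; rewrite eq_le h0 andbT leNgt; apply/negP => hpos.
    have := hm kk (z - q *: y kk).
    rewrite hk1 hy2 leNgt h1 => /(_ _ hpos) H; suff : false by [].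
    apply: H.
    by move=> i' hi'; rewrite hk1 hz ?hy1 ?mulr0 ?subr0.
exists (fun j => t' j + q * (j == kk)%:R); rewrite sum_update -ht'.
by rewrite subrK.
Qed.


Lemma reduce c y : fam c y -> forall n z, exists t : 'I_d -> int,
  (forall i : 'I_d, (n <= i)%N -> kap (z - \sum_j t j *: y j) i = kap z i) /\
  (forall i : 'I_d, (i < n)%N -> 0 <= kap (z - \sum_j t j *: y j) i < c i).
Proof.
move=> hf; elim=> [|n IH] z.
  exists (fun _ => 0); rewrite big1 ?subr0; last by move=> j _; rewrite scale0r.
  by split.
case: (ltnP n d) => hn; last first.
  have [t [h1 h2]] := IH z; exists t; split=> i hi.
    by apply: h1; apply: ltnW.
  by apply: h2; apply: leq_trans (ltn_ord i) hn.
pose kk := Ordinal hn.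
pose q := (kap z kk %/ c kk)%Z.
have [hy1 [hy2 hc]] := hf kk.
have hk1 : forall i, kap (z - q *: y kk) i = kap z i - q * kap (y kk) i.
  by move=> i; rewrite /kap mulmxBl -scalemxAl !mxE.
have [t' [h1 h2]] := IH (z - q *: y kk).
exists (fun j => t' j + q * (j == kk)%:R).
have key : z - \sum_j (t' j + q * (j == kk)%:R) *: y j = z - q *: y kk - \sum_j t' j *: y j.
  by rewrite sum_update opprD addrA addrAC.
rewrite key; split=> i hi.
  by rewrite h1 ?(ltnW hi) // hk1 hy1 // mulr0 subr0.
rewrite ltnS leq_eqVlt in hi; case/orP: hi => hi; last exact: h2.
have -> : i = kk by apply: val_inj; apply/eqP.
by rewrite h1 // hk1 hy2 mod_step.
Qed.

Lemma kap_row k i : kap (row k M) i = NN *+ (k == i).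
Proof. by rewrite /kap -row_mul MG !mxE. Qed.

Lemma exists_fam : exists c y, fam c y /\ minimal c /\ (forall k, c k <= NN).
Proof.
have H : forall k : 'I_d, exists cz : int * 'rV[int]_d,
  (forall i : 'I_d, (k < i)%N -> kap cz.2 i = 0) /\ kap cz.2 k = cz.1 /\ 0 < cz.1 /\ cz.1 <= NN /\
  (forall z, (forall i : 'I_d, (k < i)%N -> kap z i = 0) -> 0 < kap z k -> cz.1 <= kap z k).
  move=> k.
  pose P n := exists z, (forall i : 'I_d, (k < i)%N -> kap z i = 0) /\ kap z k = n%:Z /\ (0 < n)%N.
  have hP : P `|\det M|%N.
    exists (row k M); split.
      move=> i hi; have ne : k != i by apply/eqP => e; move: hi; rewrite e ltnn.
      by rewrite kap_row (negbTE ne).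
    by rewrite kap_row eqxx abszE absz_gt0 hdet.
  have [m [[z [hz1 [hz2 hz3]]] hmin]] := ex_minP hP.
  exists (m%:Z, z); split=> //; split=> //; split; first by rewrite ltz_nat.
  split; first by rewrite /NN -abszE lez_nat; apply: hmin.
  move=> z' h1 h2 /=; have e : kap z' k = (`|kap z' k|%N)%:Z by rewrite gez0_abs // ltW.
  rewrite e lez_nat; apply: hmin; exists z'; split=> //; split=> //.
  by rewrite -ltz_nat -e.
have [f hf] := choiceF H.
exists (fun k => (f k).1), (fun k => (f k).2); split; last split.
- by move=> k; have [h1 [h2 [h3 _]]] := hf k.
- by move=> k z; have [_ [_ [_ [_ h]]]] := hf k; apply: h.
- by move=> k; have [_ [_ [_ [h _]]]] := hf k.
Qed.

Lemma good_basis : exists y : 'I_d -> 'rV[int]_d,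
  (forall k i, 0 <= kap (y k) i <= NN) /\ (forall z, exists t : 'I_d -> int, z = \sum_j t j *: y j).
Proof.
have [c [x [hf [hm hN]]]] := exists_fam.
have H : forall k : 'I_d, exists y' : 'rV[int]_d,
   (forall i : 'I_d, (k <= i)%N -> kap y' i = kap (x k) i) /\
   (forall i : 'I_d, (i < k)%N -> 0 <= kap y' i < c i).
  move=> k; have [t ht] := reduce hf k (x k); by exists (x k - \sum_j t j *: x j).
have [y hy] := choiceF H.
have hfy : fam c y.
  move=> k; have [h1 _] := hy k; have [g1 [g2 g3]] := hf k.
  split; first by move=> i hi; rewrite h1 ?(ltnW hi) // g1.
  by rewrite h1.
exists y; split.
  move=> k i; have [h1 h2] := hy k; have [g1 [g2 g3]] := hf k.
  case: (ltngtP k i) => hki.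
  - by rewrite h1 ?(ltnW hki) // g1 // lexx ltW // NN_gt0.
  - by have /andP [a b] := h2 i hki; rewrite a /= (le_trans (ltW b)).
  - have -> : i = k by apply: val_inj.
    by rewrite h1 // g2 (ltW g3) hN.
move=> z; apply: (span_all hfy hm (n := d)) => i hi.
by have := ltn_ord i; rewrite ltnNge hi.
Qed.

End Comb.

Section Real.
Variables (R : archiRcfType) (d : nat) (v : 'I_d -> 'rV[int]_d).

Local Notation f := (fun k : int => k%:~R : R).
Definition MM : 'M[int]_d := \matrix_i v i.
Definition MR : 'M[R]_d := map_mx f MM.

Lemma row_MR i : row i MR = intv R (v i).
Proof. by rewrite /MR -map_row /MM rowK. Qed.

Lemma MR_comb (u : 'rV[R]_d) : u *m MR = \sum_i u 0 i *: intv R (v i).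
Proof. by rewrite mulmx_sum_row; apply: eq_bigr => i _; rewrite row_MR. Qed.

Lemma det_nz : lin_indep R v -> \det MM != 0.
Proof.
move=> hl; apply/negP => /eqP h0.
have : \det MR == 0 by rewrite /MR det_map_mx h0.
case/det0P => c hc hc0; move/negP: hc; apply; apply/eqP/rowP => j.
rewrite MR_comb in hc0; rewrite mxE.
exact: (hl (fun i => c 0 i) hc0 j).
Qed.

Lemma pp_mem (a : 'rV[R]_d) c t : (forall i, 0 <= t i <= 1) ->
  parallelepiped a c v (a + \sum_i (t i * c) *: intv R (v i)).
Proof.
move=> ht; exists (fun i => (t i * c) *: intv R (v i)); split => // i.
exists (fun j : 'I_2 => if val j == 0%N then 1 - t i else t i).
have /andP [h0 h1] := ht i.
split; first by move=> j; case: ifP => _; rewrite ?subr_ge0.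
rewrite !big_ord_recl !big_ord0 /=; split; first by lra.
by rewrite scaler0 add0r addr0 scalerA mulrC.
Qed.

Lemma seg_inv (w y : 'rV[R]_d) : segment 0 w y -> exists t : R, 0 <= t <= 1 /\ y = t *: w.
Proof.
case=> lam [h0 [h1 ->]]; rewrite !big_ord_recl !big_ord0 /= in h1 *.
exists (lam (lift ord0 ord0)); split; last by rewrite scaler0 add0r addr0.
have := h0 ord0; have := h0 (lift ord0 ord0); move: h1.
set a := lam ord0; set b := lam _ => h1 ha hb.
by apply/andP; split; lra.
Qed.

Lemma Delta_bounds (y : 'rV[R]_d) : Delta y -> (forall k, 0 <= y 0 k) /\ \sum_k y 0 k <= 1.
Proof.
case=> lam [h0 [h1 ->]].
have hv : forall j : 'I_d.+1, (forall k, 0 <= simplex_vert R j 0 k) /\ \sum_k simplex_vert R j 0 k <= 1.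
  move=> j; rewrite /simplex_vert; case: (unlift ord0 j) => [jj|].
    split; first by move=> k; rewrite mxE; case: (_ && _).
    rewrite (bigD1 jj) //= big1 => [|k' hk']; first by rewrite !mxE !eqxx addr0.
    by rewrite mxE (negbTE hk') andbF.
  by split; [move=> k; rewrite mxE | rewrite big1 // => k' _; rewrite mxE].
split.
  move=> k; rewrite summxE sumr_ge0 // => j _; rewrite mxE mulr_ge0 //.
  by case: (hv j) => ->.
under eq_bigr do rewrite summxE.
rewrite exchange_big /= -h1 ler_sum // => j _.
under eq_bigr do rewrite mxE.
by rewrite -mulr_sumr ler_piMr //; case: (hv j).
Qed.

Lemma part1 : lin_indep R v -> forall a : 'rV[int]_d,
  contains_unimodular_copy (parallelepiped (intv R a) 1 v) (@Delta R d).
Proof.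
move=> hl a; have hdet := det_nz hl.
have [y [hr hs]] := good_basis hdet.
pose A : 'M[int]_d := \matrix_k y k.
have [T hT] := choiceF (fun i : 'I_d => hs (delta_mx 0 i)).
have hA : A \in unitmx.
  pose C : 'M[int]_d := \matrix_(i, k) T i k.
  suff : C *m A = 1%:M by case/mulmx1_unit.
  apply/row_matrixP => i; rewrite row_mul mulmx_sum_row row1 [RHS]hT.
  by apply: eq_bigr => k _; rewrite rowK !mxE.
exists A, a; split => // x [y0 [hy0 ->]].
have [hb hs1] := Delta_bounds hy0.
pose NR : R := (NN MM)%:~R.
pose GR := map_mx f (GG MM).
pose AR := map_mx f A.
pose mu := NR^-1 *: (y0 *m AR *m GR).
have hNR : 0 < NR by rewrite ltr0z NN_gt0.
have hGM : GR *m MR = NR%:M by rewrite /GR /MR -map_mxM GM map_scalar_mx.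
have e1 : y0 *m AR = mu *m MR.
  by rewrite /mu -scalemxAl -!mulmxA hGM mul_mx_scalar -scalemxAr scalerA mulVf ?scale1r // gt_eqF.
have hw : forall k i, (AR *m GR) k i = (kap MM (y k) i)%:~R.
  move=> k i; rewrite -map_mxM mxE.
  suff -> : (A *m GG MM) k i = kap MM (y k) i by [].
  by rewrite /kap -[y k](rowK (fun k => y k)) -row_mul [RHS]mxE.
have hmu : forall i, 0 <= mu 0 i <= 1.
  move=> i; rewrite /mu -mulmxA mxE mxE.
  under eq_bigr do rewrite hw.
  apply/andP; split.
    rewrite mulr_ge0 ?invr_ge0 ?(ltW hNR) // sumr_ge0 // => k _.
    by rewrite mulr_ge0 // ler0z; case/andP: (hr k i).
  rewrite ler_pdivrMl // mulr1.
  apply: (@le_trans _ _ (\sum_k y0 0 k * NR)).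
    apply: ler_sum => k _; apply: ler_wpM2l => //.
    by rewrite ler_int; case/andP: (hr k i).
  by rewrite -mulr_suml ler_piMl // ltW.
rewrite e1 MR_comb addrC.
suff -> : \sum_i mu 0 i *: intv R (v i) = \sum_i (mu 0 i * 1) *: intv R (v i).
  exact: pp_mem.
by apply: eq_bigr => i _; rewrite mulr1.
Qed.

Lemma part2 : lin_indep R v -> forall a : 'rV[R]_d,
  contains_unimodular_copy (parallelepiped a 2 v) (@Delta R d).
Proof.
move=> hl a; have hdet := det_nz hl.
have hMR : MR \in unitmx by rewrite unitmxE /MR det_map_mx unitfE intr_eq0.
pose mu0 := a *m invmx MR.
pose n : 'rV[int]_d := \row_i Num.ceil (mu0 0 i).
pose b := n *m MM.
have [A [b' [hA hsub]]] := part1 hl b.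
exists A, b'; split => // x /hsub [yy [hyy ->]].
have [tt htt] := choiceF (fun i => seg_inv (hyy i)).
pose s i := (Num.ceil (mu0 0 i))%:~R - mu0 0 i.
have hs : forall i, 0 <= s i <= 1.
  move=> i; rewrite /s; set z := mu0 0 i.
  have h1 := ceil_ge z.
  have : (Num.ceil z <= Num.ceil z - 1) = false.
    by apply/negbTE; rewrite -ltNge ltrBlDr ltrDl ltr01.
  rewrite ceil_le_int intrB => /negbT; rewrite -ltNge => h2.
  by apply/andP; split; lra.
have eb : intv R b = a + \sum_i s i *: intv R (v i).
  rewrite /intv /b map_mxM -/MR.
  have -> : map_mx f n = mu0 + (map_mx f n - mu0) by rewrite addrC subrK.
  rewrite mulmxDl /mu0 mulmxKV // MR_comb; congr (_ + _).
  by apply: eq_bigr => i _; rewrite /s !mxE.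
rewrite eb.
suff -> : a + \sum_i s i *: intv R (v i) + \sum_i yy i =
          a + \sum_i ((s i + tt i) / 2 * 2) *: intv R (v i).
  apply: pp_mem => i; have /andP [h1 h2] := hs i; have [/andP [h3 h4] _] := htt i.
  by apply/andP; split; lra.
rewrite -addrA -big_split; congr (_ + _); apply: eq_bigr => i _.
have [_ ->] := htt i; rewrite scale1r divfK ?pnatr_eq0 //. exact: (esym (scalerDl _ _ _)).
Qed.

End Real.

Theorem lemma4p2 (R : archiRcfType) (d : nat) (v : 'I_d -> 'rV[int]_d) :
  lin_indep R v ->
  (forall a : 'rV[int]_d,
     contains_unimodular_copy (parallelepiped (intv R a) 1 v) (@Delta R d)) /\
  (forall a : 'rV[R]_d,
     contains_unimodular_copy (parallelepiped a 2 v) (@Delta R d)).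
Proof. by move=> hl; split; [apply: part1 | apply: part2]. Qed.
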